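(* Let $X$ be a non-empty set, $\Lambda$ and $Y$ topological spaces, $y_0\in Y$. Let $\varphi\in\mathcal{G}$, $\Psi\in\mathcal{H}$ and $J\in\mathcal{M}$. Then, for each $\mu>\theta(\varphi,\Psi,J)$ and each filtering cover $\mathcal{N}$ of $X$, there exists $A\in\mathcal{N}$ such that $$\sup_{\lambda\in\Lambda}\inf_{x\in A}\big(J(x)-\mu\varphi(\Psi(x,\lambda))\big)<\inf_{x\in A}\sup_{z\in A}\big(J(x)-\mu\varphi(\Psi(x,\lambda_z))\big).$$
   Context: A family $\mathcal{N}$ of non-empty subsets of $X$ is a filtering cover of $X$ if $\bigcup_{A\in\mathcal{N}}A=X$ and for each $A_1,A_2\in\mathcal{N}$ there is $A_3\in\mathcal{N}$ with $A_1\cup A_2\subseteq A_3$. $\mathcal{G}$ is the family of all lower semicontinuous functions $\varphi:Y\to[0,+\infty[$ with $\varphi^{-1}(0)=\{y_0\}$ such that $\inf_{Y\setminus V}\varphi>0$ for each neighbourhood $V$ of $y_0$. $\mathcal{H}$ is the family of all functions $\Psi:X\times\Lambda\to Y$ such that, for each $x\in X$, $\Psi(x,\cdot)$ is continuous, injective, open, and takes the value $y_0$ at a point $\lambda_x$ (necessarily unique), and the function $x\mapsto\lambda_x$ is not constant. $\mathcal{M}$ is the family of all functions $J:X\to\mathbb{R}$ whose set $M_J$ of global minima is non-empty. For $\varphi\in\mathcal{G}$, $\Psi\in\mathcal{H}$, $J\in\mathcal{M}$, $$\theta(\varphi,\Psi,J)=\inf\left\{\frac{J(x)-J(u)}{\varphi(\Psi(x,\lambda_u))}:(u,x)\in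 M_J\times X,\ \lambda_x\neq\lambda_u\right\}.$$ *)

(* Defs.v *)
From HB Require Import structures.
From mathcomp Require Import all_boot all_order all_algebra.
From mathcomp Require Import all_classical all_reals all_analysis.
Set Implicit Arguments. Unset Strict Implicit. Unset Printing Implicit Defensive.
Import Order.TTheory GRing.Theory Num.Theory.
Local Open Scope classical_set_scope.
Local Open Scope ring_scope.

Definition filtering_cover {X : Type} (N : set (set X)) : Prop :=
  (forall A, N A -> A !=set0) /\
  \bigcup_(A in N) A = setT /\
  (forall A1 A2, N A1 -> N A2 -> exists2 A3, N A3 & A1 `|` A2 `<=` A3).

Definition open_map {S T : topologicalType} (f : S -> T) : Prop :=
  forall U : set S, open U -> open (f @` U).

Definition in_G {R : realType} {Y : topologicalType} (y0 : Y) (phi : Y -> R) : Prop :=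
  lower_semicontinuous (fun y => (phi y)%:E) /\
  (forall y, 0 <= phi y) /\
  phi @^-1` [set 0] = [set y0] /\
  (forall V, nbhs y0 V -> (0 < ereal_inf [set (phi y)%:E | y in ~` V])%E).

(* The class H; lam x is the (necessarily unique) point lambda_x with Psi x lam_x = y0. *)
Definition in_H {X : Type} {Lam Y : topologicalType} (y0 : Y)
    (Psi : X -> Lam -> Y) (lam : X -> Lam) : Prop :=
  (forall x, continuous (Psi x)) /\
  (forall x, injective (Psi x)) /\
  (forall x, open_map (Psi x)) /\
  (forall x, Psi x (lam x) = y0) /\
  (exists x1 x2, lam x1 <> lam x2).

Definition argminset {X : Type} {R : realType} (J : X -> R) : set X :=
  [set u | forall x, J u <= J x].

Definition in_M {X : Type} {R : realType} (J : X -> R) : Prop :=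
  argminset J !=set0.

Definition theta {X : Type} {Lam Y : topologicalType} {R : realType}
    (phi : Y -> R) (Psi : X -> Lam -> Y) (lam : X -> Lam) (J : X -> R) : \bar R :=
  ereal_inf [set ((J ux.2 - J ux.1) / phi (Psi ux.2 (lam ux.1)))%:E
            | ux in [set ux : X * X | argminset J ux.1 /\ lam ux.2 <> lam ux.1]].

(* Main.v *)
Require Import Defs.
From HB Require Import structures.
From mathcomp Require Import all_boot all_order all_algebra.
From mathcomp Require Import all_classical all_reals all_analysis.
From mathcomp Require Import ring lra.
Import Order.TTheory GRing.Theory Num.Theory.
Local Open Scope classical_set_scope.
Local Open Scope ring_scope.

Theorem theorem3p1 (R : realType) (X : Type) (Lam Y : topologicalType) (y0 : Y)
    (phi : Y -> R) (Psi : X -> Lam -> Y) (lam : X -> Lam) (J : X -> R) :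
  [set: X] !=set0 ->
  in_G y0 phi -> in_H y0 Psi lam -> in_M J ->
  forall (mu : R), (theta phi Psi lam J < mu%:E)%E ->
  forall N : set (set X), filtering_cover N ->
  exists2 A, N A &
    (ereal_sup [set ereal_inf [set (J x - mu * phi (Psi x l))%:E | x in A] | l in [set: Lam]]
     < ereal_inf [set ereal_sup [set (J x - mu * phi (Psi x (lam z)))%:E | z in A]
                  | x in A])%E.
Proof.
move=> _ [lsc [phi0 [phi_pre phi_inf]]] [Pcont [Pinj [Popen [Plam _]]]] _ mu.
move=> /ereal_inf_lt [_ [[u xb] [/= hu hl] <-]] hq.
move=> N [_ [Ncov Nfil]].
have phiy0 : phi y0 = 0.
  have : [set y0] y0 by [].
  by rewrite -phi_pre /=.
set d := phi (Psi xb (lam u)).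
have dgt0 : 0 < d.
  rewrite lt_neqAle phi0 andbT; apply/negP => /eqP d0.
  have : (phi @^-1` [set 0]) (Psi xb (lam u)) by exact: (esym d0).
  rewrite phi_pre /= -(Plam xb) => /Pinj. by move=> /esym.
have Jxu : J u <= J xb := hu xb.
rewrite lte_fin in hq.
have q0 : 0 <= (J xb - J u) / d by rewrite divr_ge0 ?subr_ge0 // ltW.
have mu0 : 0 < mu by apply: le_lt_trans hq.
have hc : J xb - J u < mu * d by rewrite -ltr_pdivrMr.
set c := J u - (J xb - mu * d).
have c0 : 0 < c by rewrite /c; lra.
set a := d - (c / 2) / mu.
have mua : mu * a = mu * d - c / 2 by rewrite /a; field; rewrite gt_eqF.
have : (a%:E < (phi (Psi xb (lam u)))%:E)%E.
  rewrite lte_fin /a /d ltrBlDr ltrDl; apply: divr_gt0 => //; lra.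
move=> /(lsc _ _) [V1 hV1 V1a].
have : nbhs (lam u) (Psi xb @^-1` V1) by apply: Pcont.
rewrite nbhsE => -[W [Wo Wu] WV1].
have Vn : nbhs y0 (Psi u @` W).
  apply: open_nbhs_nbhs; split; first exact: Popen.
  by exists (lam u).
have [eta eta0 etale] : exists2 eta : R, 0 < eta &
    forall y, ~ (Psi u @` W) y -> eta <= phi y.
  move: (phi_inf _ Vn).
  case E: (ereal_inf _) => [r| |] // r0.
  - exists r; first by rewrite -lte_fin.
    move=> y hy; rewrite -lee_fin -E; apply: ereal_inf_lbound; by exists y.
  - exists 1 => // y hy.
    have : (ereal_inf [set (phi y1)%:E | y1 in ~` (Psi u @` W)] <= (phi y)%:E)%E.
      by apply: ereal_inf_lbound; exists y.
    by rewrite E.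
have : (\bigcup_(A in N) A) u by rewrite Ncov.
case=> A1 NA1 A1u.
have : (\bigcup_(A in N) A) xb by rewrite Ncov.
case=> A2 NA2 A2x.
have [A NA sA] := Nfil _ _ NA1 NA2.
have Au : A u by apply: sA; left.
have Ax : A xb by apply: sA; right.
exists A => //.
set m := Num.min (c / 2) (mu * eta).
have m0 : 0 < m by rewrite lt_min; apply/andP; split; [lra|apply: mulr_gt0].
apply: (@le_lt_trans _ _ (J u - m)%:E).
  apply: ge_ereal_sup => _ [l _ <-].
  case: (pselect (W l)) => Wl.
  - apply: (@le_trans _ _ (J xb - mu * phi (Psi xb l))%:E).
      by apply: ereal_inf_lbound; exists xb.
    rewrite lee_fin.
    have := V1a _ (WV1 _ Wl); rewrite lte_fin => al.
    have : mu * a < mu * phi (Psi xb l) by rewrite ltr_pM2l.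
    rewrite mua => h.
    have : m <= c / 2 by rewrite ge_min lexx.
    rewrite /c in h *; lra.
  - apply: (@le_trans _ _ (J u - mu * phi (Psi u l))%:E).
      by apply: ereal_inf_lbound; exists u.
    rewrite lee_fin.
    have : eta <= phi (Psi u l).
      apply: etale => -[w Ww /Pinj wl]; by apply: Wl; rewrite -wl.
    move=> he.
    have : mu * eta <= mu * phi (Psi u l) by rewrite ler_pM2l.
    have : m <= mu * eta by rewrite ge_min lexx orbT.
    lra.
apply: (@lt_le_trans _ _ (J u)%:E).
  by rewrite lte_fin; lra.
apply: le_ereal_inf_tmp => _ [x Ax' <-].
apply: (@le_trans _ _ (J x)%:E); first by rewrite lee_fin.
apply: ereal_sup_ubound; exists x => //.
by rewrite Plam phiy0 mulr0 subr0.
Qed.
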